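(* (Cutfree completeness.) For all finite multisets of formulas $\Gamma,\Delta$: if $\Gamma\models\bigvee\Delta$, then $\vdash_{\mathsf{GT}^-}\Gamma\Rightarrow\Delta$.
   Context: Fix a countably infinite set $\mathsf{Prop}$ of propositional variables. Classical formulas are generated by $\alpha ::= p \mid \bot \mid \neg\alpha \mid \alpha\wedge\alpha \mid \alpha\vee\alpha$ with $p\in\mathsf{Prop}$. Formulas are generated by $\phi ::= \alpha \mid \phi\wedge\phi \mid \phi\vee\phi \mid \phi\mathbin{\backslash\!\!/}\phi$ where $\alpha$ is classical ($\vee$: split disjunction, $\mathbin{\backslash\!\!/}$: inquisitive disjunction). A team with domain $X\subseteq\mathsf{Prop}$ is a set $t\subseteq 2^X$ of valuations. For a team $t$ whose domain contains the variables of the formula: $t\models p$ iff $v(p)=1$ for all $v\in t$; $t\models\bot$ iff $t=\emptyset$; $t\models\neg\alpha$ iff $\{v\}\not\models\alpha$ for all $v\in t$; $t\models\phi\wedge\psi$ iff both hold; $t\models\phi\vee\psi$ iff there are $s,u\subseteq t$ with $t=s\cup u$, $s\models\phi$, $u\models\psi$; $t\models\phi\mathbin{\backslash\!\!/}\psi$ iff $t\models\phi$ or $t\models\psi$. $\Gamma\models\phi$ means every team satisfying all members of the multiset $\Gamma$ satisfies $\phi$. $\bigvee\emptyset:=\bot$. A sequent is $\Gamma\Rightarrow\Delta$ with $\Gamma,\Delta$ finite multisets; ''$\Gamma,\Delta$'' is multiset union. Deep-inference notation: for a formula $\chi$ with a designated occurrence of a subformula not in the scope of any negation, $\chi\{\eta\}$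 denotes the result of replacing that occurrence by $\eta$. The cut-free calculus $\mathsf{GT}^-$ ($\alpha$ ranges over classical formulas, $\Lambda$ over multisets of classical formulas): axioms $\Gamma,p\Rightarrow p,\Delta$ and $\Gamma,\bot\Rightarrow\Delta$; (L$\neg$) from $\Gamma\Rightarrow\alpha,\Delta$ infer $\Gamma,\neg\alpha\Rightarrow\Delta$; (R$\neg$) from $\Gamma,\alpha\Rightarrow\Delta$ infer $\Gamma\Rightarrow\neg\alpha,\Delta$; (L$\wedge$) from $\Gamma,\phi,\psi\Rightarrow\Delta$ infer $\Gamma,\phi\wedge\psi\Rightarrow\Delta$; (R$\wedge$) from $\Gamma\Rightarrow\phi,\Lambda$ and $\Gamma\Rightarrow\psi,\Lambda$ infer $\Gamma\Rightarrow\phi\wedge\psi,\Lambda,\Delta$; (L$\vee$) from $\Gamma,\phi\Rightarrow\Lambda$ and $\Gamma,\psi\Rightarrow\Lambda$ infer $\Gamma,\phi\vee\psi\Rightarrow\Lambda,\Delta$; (R$\vee$) from $\Gamma\Rightarrow\phi,\psi,\Delta$ infer $\Gamma\Rightarrow\phi\vee\psi,\Delta$; (L$\mathbin{\backslash\!\!/}$) from $\Gamma,\chi\{\phi_L\}\Rightarrow\Delta$ and $\Gamma,\chi\{\phi_R\}\Rightarrow\Delta$ infer $\Gamma,\chi\{\phi_L\mathbin{\backslash\!\!/}\phi_R\}\Rightarrow\Delta$; (R$\mathbin{\backslash\!\!/}$) from $\Gamma\Rightarrow\chi\{\phi_i\},\Delta$ ($i\in\{L,R\}$) infer $\Gamma\Rightarrow\chi\{\phi_L\mathbin{\backslash\!\!/}\phi_R\},\Delta$.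 $\vdash_{\mathsf{GT}^-}$ denotes derivability in $\mathsf{GT}^-$. *)

(* Defs.v *)
From Stdlib Require Import List Permutation.
Import ListNotations.

Inductive form : Type :=
| Var : nat -> form
| Bot : form
| Neg : form -> form
| And : form -> form -> form
| Or  : form -> form -> form
| Inq : form -> form -> form.

Fixpoint classical (f : form) : Prop :=
  match f with
  | Var _ | Bot => True
  | Neg a => classical a
  | And a b | Or a b => classical a /\ classical b
  | Inq _ _ => False
  end.

Fixpoint wf (f : form) : Prop :=
  match f with
  | Var _ | Bot => True
  | Neg a => classical a
  | And a b | Or a b | Inq a b => wf a /\ wf b
  end.

Fixpoint vars (f : form) : list nat :=
  match f with
  | Var p => [p]
  | Bot => []
  | Neg a => vars a
  | And a b | Or a b | Inq a b => vars a ++ vars b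
  end.

Definition valuation := nat -> bool.
Definition team := valuation -> Prop.

(* t is a team with domain X, i.e. t is a subset of 2^X; an element of 2^X
   is represented canonically by a total valuation that is false outside X. *)
Definition team_on (X : nat -> Prop) (t : team) : Prop :=
  forall v, t v -> forall p, ~ X p -> v p = false.

Fixpoint sat (t : team) (f : form) : Prop :=
  match f with
  | Var p => forall v, t v -> v p = true
  | Bot => forall v, ~ t v
  | Neg a => forall v, t v -> ~ sat (fun w => w = v) a
  | And a b => sat t a /\ sat t b
  | Or a b => exists s u : team,
      (forall v, t v <-> (s v \/ u v)) /\ sat s a /\ sat u b
  | Inq a b => sat t a \/ sat t b
  end.

Definition entails (G : list form) (f : form) : Prop :=
  forall (X : nat -> Prop) (t : team),
    team_on X t ->
    (forall g, In g (f :: G) -> forall p, In p (vars g) -> X p) ->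
    (forall g, In g G -> sat t g) ->
    sat t f.

Fixpoint bigvee (D : list form) : form :=
  match D with
  | [] => Bot
  | [a] => a
  | a :: l => Or a (bigvee l)
  end.

(* deep-inference contexts: a hole not in the scope of any negation *)
Inductive ctx : Type :=
| Hole : ctx
| CAndL : ctx -> form -> ctx
| CAndR : form -> ctx -> ctx
| COrL : ctx -> form -> ctx
| COrR : form -> ctx -> ctx
| CInqL : ctx -> form -> ctx
| CInqR : form -> ctx -> ctx.

Fixpoint fill (c : ctx) (e : form) : form :=
  match c with
  | Hole => e
  | CAndL c f => And (fill c e) f
  | CAndR f c => And f (fill c e)
  | COrL c f => Or (fill c e) f
  | COrR f c => Or f (fill c e)
  | CInqL c f => Inq (fill c e) f
  | CInqR f c => Inq f (fill c e)
  end.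

Definition all_classical (L : list form) : Prop := forall a, In a L -> classical a.

(* Sequents Gamma => Delta with multisets represented as lists up to
   permutation (rule [gt_perm]). *)
Inductive GT : list form -> list form -> Prop :=
| gt_perm : forall G D G' D', GT G D -> Permutation G G' -> Permutation D D' -> GT G' D'
| gt_ax : forall G D p, GT (Var p :: G) (Var p :: D)
| gt_bot : forall G D, GT (Bot :: G) D
| gt_negL : forall G D a, classical a -> GT G (a :: D) -> GT (Neg a :: G) D
| gt_negR : forall G D a, classical a -> GT (a :: G) D -> GT G (Neg a :: D)
| gt_andL : forall G D f g, GT (f :: g :: G) D -> GT (And f g :: G) D
| gt_andR : forall G L D f g, all_classical L ->
    GT G (f :: L) -> GT G (g :: L) -> GT G (And f g :: L ++ D)
| gt_orL : forall G L D f g, all_classical L ->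
    GT (f :: G) L -> GT (g :: G) L -> GT (Or f g :: G) (L ++ D)
| gt_orR : forall G D f g, GT G (f :: g :: D) -> GT G (Or f g :: D)
| gt_inqL : forall G D (c : ctx) fL fR,
    GT (fill c fL :: G) D -> GT (fill c fR :: G) D -> GT (fill c (Inq fL fR) :: G) D
| gt_inqR1 : forall G D (c : ctx) fL fR,
    GT G (fill c fL :: D) -> GT G (fill c (Inq fL fR) :: D)
| gt_inqR2 : forall G D (c : ctx) fL fR,
    GT G (fill c fR :: D) -> GT G (fill c (Inq fL fR) :: D).

(* Main.v *)
Require Import Defs.
From Stdlib Require Import List Permutation Lia Classical.
Import ListNotations.

Definition single (v : valuation) : team := fun w => w = v.

Lemma sat_down : forall f t t', sat t f -> (forall v, t' v -> t v) -> sat t' f.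
Proof.
  induction f; simpl; intros t t' H Hs.
  - intros v Hv; apply H, Hs, Hv.
  - intros v Hv; apply (H v), Hs, Hv.
  - intros v Hv; apply H, Hs, Hv.
  - destruct H as [H1 H2]; split; eauto.
  - destruct H as [s [u [Hsu [H1 H2]]]].
    exists (fun v => s v /\ t' v), (fun v => u v /\ t' v).
    split; [|split].
    + intros v; split.
      * intros Hv. destruct (proj1 (Hsu v) (Hs v Hv)); tauto.
      * intros [[? ?]|[? ?]]; auto.
    + eapply IHf1; eauto. intros v [? ?]; auto.
    + eapply IHf2; eauto. intros v [? ?]; auto.
  - destruct H; [left|right]; eauto.
Qed.

Lemma sat_empty : forall f t, (forall v, ~ t v) -> sat t f.
Proof.
  induction f; simpl; intros t Ht.
  - intros v Hv; exfalso; eapply Ht; eauto.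
  - auto.
  - intros v Hv; exfalso; eapply Ht; eauto.
  - split; auto.
  - exists t, t; split; [intros v; tauto| split; auto].
  - left; auto.
Qed.

Lemma flat : forall a, classical a -> forall t,
  (forall v, t v -> sat (single v) a) -> sat t a.
Proof.
  induction a; simpl; intros Hc t H.
  - intros v Hv. apply (H v Hv). reflexivity.
  - intros v Hv. apply (H v Hv v). reflexivity.
  - intros v Hv. apply (H v Hv v). reflexivity.
  - destruct Hc as [Hc1 Hc2]; split; [apply IHa1|apply IHa2]; auto;
      intros v Hv; [exact (proj1 (H v Hv))|exact (proj2 (H v Hv))].
  - destruct Hc as [Hc1 Hc2].
    exists (fun v => t v /\ sat (single v) a1), (fun v => t v /\ sat (single v) a2).
    split; [|split].
    + intros v; split; [|intros [[? ?]|[? ?]]; auto].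
      intros Hv. destruct (H v Hv) as [s [u [Hsu [Hs Hu]]]].
      destruct (proj1 (Hsu v) eq_refl) as [Hv'|Hv'].
      * left; split; auto. eapply sat_down; [exact Hs|].
        intros w Hw; unfold single in Hw; subst; auto.
      * right; split; auto. eapply sat_down; [exact Hu|].
        intros w Hw; unfold single in Hw; subst; auto.
    + apply IHa1; auto. intros v [_ ?]; auto.
    + apply IHa2; auto. intros v [_ ?]; auto.
  - contradiction.
Qed.

Lemma sat_single_or : forall v a b,
  sat (single v) (Or a b) <-> sat (single v) a \/ sat (single v) b.
Proof.
  intros v a b; split.
  - intros [s [u [Hsu [Hs Hu]]]].
    destruct (proj1 (Hsu v) eq_refl) as [Hv'|Hv'].
    + left. eapply sat_down; [exact Hs|]. intros w Hw; unfold single in Hw; subst; auto.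
    + right. eapply sat_down; [exact Hu|]. intros w Hw; unfold single in Hw; subst; auto.
  - intros [H|H].
    + exists (single v), (fun _ => False). split; [intros w; tauto|split; auto].
      apply sat_empty; auto.
    + exists (fun _ => False), (single v). split; [intros w; tauto|split; auto].
      apply sat_empty; auto.
Qed.

Fixpoint satD (t : team) (D : list form) : Prop :=
  match D with
  | [] => forall v, ~ t v
  | a :: l => exists s u : team, (forall v, t v <-> (s v \/ u v)) /\ sat s a /\ satD u l
  end.

Lemma bigvee_satD : forall D t, sat t (bigvee D) -> satD t D.
Proof.
  induction D as [|a l IH]; intros t H.
  - exact H.
  - destruct l as [|b l'].
    + exists t, (fun _ => False). simpl. split; [intros v; tauto|split; auto].
    + change (sat t (Or a (bigvee (b :: l')))) in H.
      destruct H as [s [u [? [? ?]]]]. exists s, u. auto.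
Qed.

Lemma satD_down : forall D t t', satD t D -> (forall v, t' v -> t v) -> satD t' D.
Proof.
  induction D as [|a l IH]; simpl; intros t t' H Hs.
  - intros v Hv; apply (H v), Hs, Hv.
  - destruct H as [s [u [Hsu [H1 H2]]]].
    exists (fun v => s v /\ t' v), (fun v => u v /\ t' v).
    split; [|split].
    + intros v; split.
      * intros Hv. destruct (proj1 (Hsu v) (Hs v Hv)); tauto.
      * intros [[? ?]|[? ?]]; auto.
    + eapply sat_down; eauto. intros v [? ?]; auto.
    + eapply IH; eauto. intros v [? ?]; auto.
Qed.

Lemma satD_perm : forall D D', Permutation D D' -> forall t, satD t D -> satD t D'.
Proof.
  intros D D' HP; induction HP; intros t H.
  - exact H.
  - destruct H as [s [u [Hsu [H1 H2]]]]. exists s, u; auto.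
  - destruct H as [s1 [u1 [H1 [Hs1 [s2 [u2 [H2 [Hs2 Hu2]]]]]]]].
    exists s2, (fun v => s1 v \/ u2 v). split; [|split; auto].
    + intros v; specialize (H1 v); specialize (H2 v); tauto.
    + exists s1, u2. split; [intros v; tauto|auto].
  - auto.
Qed.

Lemma satD_single : forall D v, satD (single v) D -> exists d, In d D /\ sat (single v) d.
Proof.
  induction D as [|a l IH]; simpl; intros v H.
  - exfalso; apply (H v); reflexivity.
  - destruct H as [s [u [Hsu [Hs Hu]]]].
    destruct (proj1 (Hsu v) eq_refl) as [Hv'|Hv'].
    + exists a; split; auto. eapply sat_down; [exact Hs|].
      intros w Hw; unfold single in Hw; subst; auto.
    + destruct (IH v) as [d [Hd Hsd]].
      * eapply satD_down; [exact Hu|]. intros w Hw; unfold single in Hw; subst; auto.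
      * exists d; auto.
Qed.

Lemma fill_mono : forall c x y, (forall t, sat t x -> sat t y) ->
  forall t, sat t (fill c x) -> sat t (fill c y).
Proof.
  induction c; simpl; intros x y Hxy t H.
  - auto.
  - destruct H as [H1 H2]; split; [eapply IHc; eauto|auto].
  - destruct H as [H1 H2]; split; [auto|eapply IHc; eauto].
  - destruct H as [s [u [H1 [H2 H3]]]]; exists s, u; split; [auto|split; [eapply IHc; eauto|auto]].
  - destruct H as [s [u [H1 [H2 H3]]]]; exists s, u; split; [auto|split; [auto|eapply IHc; eauto]].
  - destruct H as [H|H]; [left; eapply IHc; eauto|right; auto].
  - destruct H as [H|H]; [left; auto|right; eapply IHc; eauto].
Qed.

Lemma fill_inq_split : forall c a b t, sat t (fill c (Inq a b)) ->
  sat t (fill c a) \/ sat t (fill c b).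
Proof.
  induction c; simpl; intros a b t H.
  - exact H.
  - destruct H as [H1 H2]; destruct (IHc a b t H1); [left|right]; auto.
  - destruct H as [H1 H2]; destruct (IHc a b t H2); [left|right]; auto.
  - destruct H as [s [u [H1 [H2 H3]]]]; destruct (IHc a b s H2);
      [left|right]; exists s, u; auto.
  - destruct H as [s [u [H1 [H2 H3]]]]; destruct (IHc a b u H3);
      [left|right]; exists s, u; auto.
  - destruct H as [H|H].
    + destruct (IHc a b t H); [left; left|right; left]; auto.
    + left; right; auto.
  - destruct H as [H|H].
    + left; left; auto.
    + destruct (IHc a b t H); [left; right|right; right]; auto.
Qed.

Lemma classical_wf : forall f, classical f -> wf f.
Proof. induction f; simpl; tauto. Qed.

Lemma wf_decomp : forall f, wf f -> classical f \/
  exists c a b, f = fill c (Inq a b) /\ wf (fill c a) /\ wf (fill c b).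
Proof.
  induction f; simpl; intros H.
  - left; auto.
  - left; auto.
  - left; auto.
  - destruct H as [H1 H2].
    destruct (IHf1 H1) as [C1|[c [a [b [E [W1 W2]]]]]].
    + destruct (IHf2 H2) as [C2|[c [a [b [E [W1 W2]]]]]].
      * left; auto.
      * right; exists (CAndR f1 c), a, b; subst; simpl; repeat split; auto.
    + right; exists (CAndL c f2), a, b; subst; simpl; repeat split; auto.
  - destruct H as [H1 H2].
    destruct (IHf1 H1) as [C1|[c [a [b [E [W1 W2]]]]]].
    + destruct (IHf2 H2) as [C2|[c [a [b [E [W1 W2]]]]]].
      * left; auto.
      * right; exists (COrR f1 c), a, b; subst; simpl; repeat split; auto.
    + right; exists (COrL c f2), a, b; subst; simpl; repeat split; auto.
  - right; exists Hole, f1, f2; simpl; auto.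
Qed.

Lemma list_pick : forall (P : form -> Prop) l, (forall x, In x l -> P x) \/
  exists x l', Permutation l (x :: l') /\ ~ P x.
Proof.
  intros P; induction l as [|a l IH].
  - left; intros x [].
  - destruct (classic (P a)) as [Ha|Ha].
    + destruct IH as [IH|[x [l' [Hp Hx]]]].
      * left; intros x [<-|Hx]; auto.
      * right; exists x, (a :: l'); split; auto.
        eapply perm_trans; [apply perm_skip, Hp|apply perm_swap].
    + right; exists a, l; split; auto.
Qed.

Fixpoint fsize f := match f with
  | Var _ | Bot => 1
  | Neg a => S (fsize a)
  | And a b | Or a b | Inq a b => S (fsize a + fsize b) end.
Fixpoint lsize l := match l with [] => 0 | x :: l => fsize x + lsize l end.

Lemma lsize_perm : forall l l', Permutation l l' -> lsize l = lsize l'.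
Proof. intros l l' H; induction H; simpl; lia. Qed.

Lemma fill_size1 : forall c a b, fsize (fill c a) < fsize (fill c (Inq a b)).
Proof. induction c; simpl; intros; try specialize (IHc a b); lia. Qed.
Lemma fill_size2 : forall c a b, fsize (fill c b) < fsize (fill c (Inq a b)).
Proof. induction c; simpl; intros; try specialize (IHc a b); lia. Qed.

Definition cvalid G D := forall v, (forall g, In g G -> sat (single v) g) ->
  exists d, In d D /\ sat (single v) d.

Lemma form_eq_dec : forall x y : form, {x = y} + {x <> y}.
Proof. decide equality; apply PeanoNat.Nat.eq_dec. Qed.

Definition gval (G : list form) : valuation :=
  fun p => if in_dec form_eq_dec (Var p) G then true else false.

Lemma phase3 : forall n G D, lsize G + lsize D < n -> all_classical G ->
  all_classical D -> cvalid G D -> GT G D.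
Proof.
  induction n as [|n IH]; intros G D Hn HG HD HV; [lia|].
  destruct (list_pick (fun x => exists p, x = Var p) G) as [GA|[x [G' [HpG Hx]]]].
  - destruct (list_pick (fun x => (exists p, x = Var p) \/ x = Bot) D)
      as [DA|[x [D' [HpD Hx]]]].
    + destruct (HV (gval G)) as [d [Hd Hsd]].
      { intros g Hg. destruct (GA g Hg) as [p ->]. simpl. intros w Hw.
        unfold single in Hw. subst w. unfold gval.
        destruct (in_dec form_eq_dec (Var p) G); [reflexivity|contradiction]. }
      destruct (DA d Hd) as [[p ->] | ->].
      * assert (HpG : In (Var p) G).
        { simpl in Hsd. specialize (Hsd (gval G) eq_refl). unfold gval in Hsd.
          destruct (in_dec form_eq_dec (Var p) G); [auto|discriminate]. }
        destruct (in_split _ _ HpG) as [G1 [G2 ->]].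
        destruct (in_split _ _ Hd) as [D1 [D2 ->]].
        eapply gt_perm; [apply (gt_ax (G1 ++ G2) (D1 ++ D2) p)| |];
          apply Permutation_middle.
      * simpl in Hsd. exfalso; apply (Hsd (gval G)); reflexivity.
    + pose proof (lsize_perm _ _ HpD) as E; simpl in E.
      assert (HD' : all_classical D').
      { intros y Hy; apply HD; apply (Permutation_in _ (Permutation_sym HpD)); right; auto. }
      assert (Cx : classical x).
      { apply HD; apply (Permutation_in _ (Permutation_sym HpD)); left; auto. }
      apply (gt_perm G (x :: D')); [| apply Permutation_refl | apply Permutation_sym, HpD].
      destruct x as [p| |a|a b|a b|a b].
      * exfalso; apply Hx; left; eauto.
      * exfalso; apply Hx; right; auto.
      * apply gt_negR; [exact Cx|]. apply IH; [simpl in *; lia| |auto|].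
        { intros y [<-|Hy]; auto. }
        intros v Hv. destruct (HV v) as [d [Hd Hsd]].
        { intros; apply Hv; right; auto. }
        apply (Permutation_in _ HpD) in Hd. destruct Hd as [<-|Hd].
        -- exfalso. simpl in Hsd. apply (Hsd v eq_refl). exact (Hv a (or_introl eq_refl)).
        -- exists d; auto.
      * destruct Cx as [Ca Cb].
        replace (And a b :: D') with (And a b :: D' ++ []) by (rewrite app_nil_r; reflexivity).
        apply gt_andR; [exact HD'| |].
        -- apply IH; [simpl in *; lia|auto| |].
           { intros y [<-|Hy]; auto. }
           intros v Hv. destruct (HV v Hv) as [d [Hd Hsd]].
           apply (Permutation_in _ HpD) in Hd. destruct Hd as [<-|Hd].
           ++ exists a; split; [left; auto|exact (proj1 Hsd)].
           ++ exists d; split; [right|]; auto.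
        -- apply IH; [simpl in *; lia|auto| |].
           { intros y [<-|Hy]; auto. }
           intros v Hv. destruct (HV v Hv) as [d [Hd Hsd]].
           apply (Permutation_in _ HpD) in Hd. destruct Hd as [<-|Hd].
           ++ exists b; split; [left; auto|exact (proj2 Hsd)].
           ++ exists d; split; [right|]; auto.
      * destruct Cx as [Ca Cb].
        apply gt_orR. apply IH; [simpl in *; lia|auto| |].
        { intros y [<-|[<-|Hy]]; auto. }
        intros v Hv. destruct (HV v Hv) as [d [Hd Hsd]].
        apply (Permutation_in _ HpD) in Hd. destruct Hd as [<-|Hd].
        -- apply sat_single_or in Hsd. destruct Hsd as [Hs|Hs].
           ++ exists a; split; [left|]; auto.
           ++ exists b; split; [right; left|]; auto.
        -- exists d; split; [right; right|]; auto.
      * contradiction.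
  - pose proof (lsize_perm _ _ HpG) as E; simpl in E.
    assert (HG' : all_classical G').
    { intros y Hy; apply HG; apply (Permutation_in _ (Permutation_sym HpG)); right; auto. }
    assert (Cx : classical x).
    { apply HG; apply (Permutation_in _ (Permutation_sym HpG)); left; auto. }
    assert (HGin : forall g, In g G -> g = x \/ In g G').
    { intros g Hg; apply (Permutation_in _ HpG) in Hg; destruct Hg; auto. }
    apply (gt_perm (x :: G') D); [| apply Permutation_sym, HpG | apply Permutation_refl].
    destruct x as [p| |a|a b|a b|a b].
    + exfalso; apply Hx; eauto.
    + apply gt_bot.
    + apply gt_negL; [exact Cx|]. apply IH; [simpl in *; lia|auto| |].
      { intros y [<-|Hy]; auto. }
      intros v Hv. destruct (classic (sat (single v) a)) as [Ha|Ha].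
      * exists a; split; [left|]; auto.
      * destruct (HV v) as [d [Hd Hsd]].
        -- intros g Hg. destruct (HGin g Hg) as [->|Hg'].
           ++ simpl. intros w Hw. unfold single in Hw; subst w. exact Ha.
           ++ apply Hv; auto.
        -- exists d; split; [right|]; auto.
    + destruct Cx as [Ca Cb].
      apply gt_andL. apply IH; [simpl in *; lia| |auto|].
      { intros y [<-|[<-|Hy]]; auto. }
      intros v Hv. apply HV. intros g Hg. destruct (HGin g Hg) as [->|Hg'].
      * split; apply Hv; [left|right; left]; auto.
      * apply Hv; right; right; auto.
    + destruct Cx as [Ca Cb].
      replace D with (D ++ []) by (rewrite app_nil_r; reflexivity).
      apply gt_orL; [exact HD| |].
      * apply IH; [simpl in *; lia| |auto|].
        { intros y [<-|Hy]; auto. }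
        intros v Hv. apply HV. intros g Hg. destruct (HGin g Hg) as [->|Hg'].
        -- apply sat_single_or; left; apply Hv; left; auto.
        -- apply Hv; right; auto.
      * apply IH; [simpl in *; lia| |auto|].
        { intros y [<-|Hy]; auto. }
        intros v Hv. apply HV. intros g Hg. destruct (HGin g Hg) as [->|Hg'].
        -- apply sat_single_or; right; apply Hv; left; auto.
        -- apply Hv; right; auto.
    + contradiction.
Qed.

Definition valid G D := forall t, (forall g, In g G -> sat t g) -> satD t D.

Lemma valid_cvalid : forall G D, valid G D -> cvalid G D.
Proof. intros G D H v Hv. apply satD_single. apply H. exact Hv. Qed.

Lemma main : forall n G D, lsize G + lsize D < n ->
  (forall f, In f G -> wf f) -> (forall f, In f D -> wf f) -> valid G D -> GT G D.
Proof.
  induction n as [|n IH]; intros G D Hn HG HD HV; [lia|].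
  destruct (list_pick classical G) as [GC|[x [G' [HpG Hx]]]].
  - destruct (list_pick classical D) as [DC|[x [D' [HpD Hx]]]].
    + apply (phase3 (S n)); auto. apply valid_cvalid; auto.
    + pose proof (lsize_perm _ _ HpD) as E; simpl in E.
      assert (Wx : wf x) by (apply HD; apply (Permutation_in _ (Permutation_sym HpD)); left; auto).
      assert (HD' : forall f, In f D' -> wf f).
      { intros y Hy; apply HD; apply (Permutation_in _ (Permutation_sym HpD)); right; auto. }
      destruct (wf_decomp x Wx) as [C|[c [a [b [-> [W1 W2]]]]]]; [contradiction|].
      pose (T := fun v => forall g, In g G -> sat (single v) g).
      assert (HT : satD T (fill c (Inq a b) :: D')).
      { apply (satD_perm D _ HpD). apply HV. intros g Hg. apply flat; [apply GC; auto|].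
        intros v Hv. exact (Hv g Hg). }
      destruct HT as [s [u [Hsu [Hs Hu]]]].
      assert (Hdown : forall t, (forall g, In g G -> sat t g) -> forall v, t v -> T v).
      { intros t Ht v Hv g Hg. eapply sat_down; [apply Ht, Hg|].
        intros w Hw; unfold single in Hw; subst; auto. }
      apply (gt_perm G (fill c (Inq a b) :: D')); [| apply Permutation_refl | apply Permutation_sym, HpD].
      destruct (fill_inq_split c a b s Hs) as [Ha|Hb].
      * apply gt_inqR1. apply IH; auto.
        -- pose proof (fill_size1 c a b); simpl in *; lia.
        -- intros y [<-|Hy]; auto.
        -- intros t Ht. apply satD_down with T; [exists s, u; auto|]. apply Hdown; auto.
      * apply gt_inqR2. apply IH; auto.
        -- pose proof (fill_size2 c a b); simpl in *; lia.
        -- intros y [<-|Hy]; auto.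
        -- intros t Ht. apply satD_down with T; [exists s, u; auto|]. apply Hdown; auto.
  - pose proof (lsize_perm _ _ HpG) as E; simpl in E.
    assert (Wx : wf x) by (apply HG; apply (Permutation_in _ (Permutation_sym HpG)); left; auto).
    assert (HG' : forall f, In f G' -> wf f).
    { intros y Hy; apply HG; apply (Permutation_in _ (Permutation_sym HpG)); right; auto. }
    assert (HGin : forall g, In g G -> g = x \/ In g G').
    { intros g Hg; apply (Permutation_in _ HpG) in Hg; destruct Hg; auto. }
    destruct (wf_decomp x Wx) as [C|[c [a [b [-> [W1 W2]]]]]]; [contradiction|].
    apply (gt_perm (fill c (Inq a b) :: G') D); [| apply Permutation_sym, HpG | apply Permutation_refl].
    apply gt_inqL.
    + apply IH; auto.
      * pose proof (fill_size1 c a b); simpl in *; lia.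
      * intros y [<-|Hy]; auto.
      * intros t Ht. apply HV. intros g Hg. destruct (HGin g Hg) as [->|Hg'].
        -- apply fill_mono with a; [intros t0 H0; left; exact H0|apply Ht; left; auto].
        -- apply Ht; right; auto.
    + apply IH; auto.
      * pose proof (fill_size2 c a b); simpl in *; lia.
      * intros y [<-|Hy]; auto.
      * intros t Ht. apply HV. intros g Hg. destruct (HGin g Hg) as [->|Hg'].
        -- apply fill_mono with b; [intros t0 H0; right; exact H0|apply Ht; left; auto].
        -- apply Ht; right; auto.
Qed.

Theorem theorem6p9 : forall (G D : list form),
  (forall f, In f G -> wf f) ->
  (forall f, In f D -> wf f) ->
  entails G (bigvee D) ->
  GT G D.
Proof.
  intros G D HG HD HE.
  apply (main (S (lsize G + lsize D))); auto.
  intros t Ht. apply bigvee_satD.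
  apply (HE (fun _ => True) t); auto; [intros v _ p Hp; exfalso; apply Hp; exact I | ..]; try (intros; exact I).
Qed.
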